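(* For every $k\ge1$, the linear map induced by $T_k$ on the quotient space $V_k/\psi_k(V_1)$ (well defined since $\psi_k(V_1)$ is $T_k$-invariant) is nilpotent.
   Context: Let $\mathcal{A}$ be a finite alphabet of $r$ symbols and $T=(T_{x,y})_{x,y\in\mathcal{A}}$ an $r\times r$ matrix with entries in $\{0,1\}$. For $k\ge1$, an admissible $k$-word is a string $a_1\cdots a_k$ of symbols with $T_{a_{i+1},a_i}=1$ for $1\le i\le k-1$. $V_k$ is the complex vector space with basis $\{[w]\}$ indexed by admissible $k$-words. $\psi_k:V_1\to V_k$ is linear with $\psi_k([a])$ the sum of $[w]$ over all admissible $k$-words $w$ beginning with $a$. $T_k:V_k\to V_k$ is linear with $T_k([a_1\cdots a_k])=\sum[a_2\cdots a_kx]$, summed over all symbols $x$ such that $a_2\cdots a_kx$ is admissible. One has $T_k\circ\psi_k=\psi_k\circ T$, where $T([a])=\sum_{b:T_{b,a}=1}[b]$. *)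

(* Defs.v *)
From HB Require Import structures.
From mathcomp Require Import all_boot all_order all_algebra.
From mathcomp Require Import complex.
Set Implicit Arguments. Unset Strict Implicit. Unset Printing Implicit Defensive.
Import Order.TTheory GRing.Theory Num.Theory.
Local Open Scope ring_scope.

(* Alphabet: a finite type A; transition matrix T : A -> A -> bool with
   T x y = T_{x,y}.  Scalars: the complex numbers R[i] over a real closed
   field R (R = the reals gives C). *)

Definition admissible (A : finType) (T : A -> A -> bool) (s : seq A) : bool :=
  sorted (fun a b => T b a) s.

Definition Word (A : finType) (T : A -> A -> bool) (k : nat) :=
  {w : k.-tuple A | admissible T w}.

Definition V (R : rcfType) (A : finType) (T : A -> A -> bool) (k : nat) :=
  {ffun Word T k -> R[i]}.

Definition basisv (R : rcfType) (A : finType) (T : A -> A -> bool) (k : nat)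
  (w : Word T k) : V R T k := [ffun w' => (w' == w)%:R].

Definition psi (R : rcfType) (A : finType) (T : A -> A -> bool) (k : nat)
  (v : V R T 1) : V R T k :=
  \sum_(u : Word T 1) v u *:
     \sum_(w : Word T k | take 1 (tval (sval w)) == tval (sval u)) basisv R w.

Definition Tk (R : rcfType) (A : finType) (T : A -> A -> bool) (k : nat)
  (v : V R T k) : V R T k :=
  \sum_(w : Word T k) v w *:
     \sum_(w' : Word T k | [exists x : A,
              tval (sval w') == rcons (behead (tval (sval w))) x]) basisv R w'.

(* Main.v *)
Require Import Defs.
From HB Require Import structures.
From mathcomp Require Import all_boot all_order all_algebra.
From mathcomp Require Import complex zify.
Set Implicit Arguments. Unset Strict Implicit. Unset Printing Implicit Defensive.
Import Order.TTheory GRing.Theory Num.Theory.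
Local Open Scope ring_scope.

Section S.
Variables (R : rcfType) (A : finType) (T : A -> A -> bool).
Definition ws (j : nat) (w : Word T j) : seq A := tval (sval w).

Lemma ws_inj j : injective (@ws j).
Proof. move=> x y H; apply: val_inj; apply: val_inj; exact: H. Qed.

Lemma sum_atmost1 (I : finType) (P : pred I) (F : I -> R[i]) :
  (forall x y, P x -> P y -> x = y) ->
  \sum_(i | P i) F i = oapp F 0 [pick i | P i].
Proof.
move=> uP; case: pickP => [x Px | P0] /=; last by rewrite big_pred0.
rewrite (big_pred1 x) // => y; apply/idP/eqP => [Py|->//]; exact: uP.
Qed.

Lemma sum_ind (I : finType) (P : pred I) j :
  \sum_(i | P i) ((j == i)%:R : R[i]) = (P j)%:R.
Proof.
case Pj: (P j).
  rewrite (bigD1 j) //= eqxx big1 ?addr0 // => i /andP[_ /negbTE].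
  by rewrite eq_sym => ->.
rewrite big1 // => i Pi; case: eqP => // E; by rewrite E Pi in Pj.
Qed.

Lemma coordE (I : finType) j (F : I -> R[i]) (P : I -> pred (Word T j)) w' :
  (\sum_w F w *: \sum_(w'' | P w w'') basisv R w'') w' =
  \sum_(w | P w w') F w.
Proof.
rewrite sum_ffunE [RHS]big_mkcond /=; apply: eq_bigr => w _.
rewrite ffunE sum_ffunE.
rewrite (eq_bigr (fun i => (w' == i)%:R)); last by move=> i _; rewrite ffunE.
rewrite sum_ind; case: (P w w') => /=; [exact: mulr1 | exact: mulr0].
Qed.

Definition S k (m : nat) (f : V R T k) :=
  forall w1 w2 : Word T k, take m (ws w1) = take m (ws w2) -> f w1 = f w2.

Lemma exists_rcons (b s : seq A) n :
  size b = n -> size s = n.+1 -> [exists x, s == rcons b x] = (b == take n s).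
Proof.
case/lastP: s => [|p y] // szb; rewrite size_rcons => -[szp].
apply/existsP/eqP => [[x /eqP ->]| ->].
  by rewrite -cats1 (take_size_cat _ szb).
by exists y; rewrite -cats1 (take_size_cat _ szp) cats1.
Qed.

Lemma TkE2 n (f : V R T n.+1) (c0 : A) w' :
  Tk f w' = \sum_c oapp f 0 [pick w | ws w == c :: take n (ws w')].
Proof.
rewrite /Tk coordE.
rewrite (eq_bigl (fun w => behead (ws w) == take n (ws w'))); last first.
  by move=> w; apply: exists_rcons; rewrite ?size_behead size_tuple.
rewrite (partition_big (fun w => head c0 (ws w)) predT) //.
apply: eq_bigr => c _; rewrite -sum_atmost1; last first.
  by move=> x y /eqP Hx /eqP Hy; apply: ws_inj; rewrite Hx Hy.
apply: eq_bigl => w; rewrite /ws.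
move: (size_tuple (sval w)); case: (tval (sval w)) => [|y s] // _ /=.
by rewrite eqseq_cons andbC.
Qed.

Lemma ext n j (w1 w2 : Word T n.+2) c (a : Word T n.+2) :
  take j.+1 (ws w1) = take j.+1 (ws w2) -> ws a = c :: take n.+1 (ws w1) ->
  exists b : Word T n.+2, ws b = c :: take n.+1 (ws w2).
Proof.
move=> E Ha.
have adma : admissible T (ws a) := svalP a.
have adm2 : admissible T (ws w2) := svalP w2.
have sz2 : size (ws w2) = n.+2 := size_tuple _.
have sz : size (c :: take n.+1 (ws w2)) == n.+2 by rewrite /= size_takel ?sz2.
have adm : admissible T (c :: take n.+1 (ws w2)).
  move: adma adm2 E sz2; rewrite Ha /admissible.
  case: (ws w1) => [|y1 r1]; case: (ws w2) => [|y2 r2] //= h1 h2 [E _] _; subst y2.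
  move/andP: h1 => [-> _] /=.
  by move: h2; rewrite -{1}(cat_take_drop n r2) cat_path => /andP[].
by exists (exist _ (Tuple sz) adm).
Qed.

Lemma step n j (f : V R T n.+2) : (j.+2 <= n.+2)%N -> S j.+2 f -> S j.+1 (Tk f).
Proof.
move=> hj Sf w1 w2 E.
have c0 : A.
  by move: (size_tuple (sval w1)); case: (tval (sval w1)) => [|c0 ?].
rewrite !(@TkE2 n.+1 _ c0); apply: eq_bigr => c _.
case: pickP => [a /eqP Ha | N1]; case: pickP => [b /eqP Hb | N2] //=.
- apply: Sf; rewrite Ha Hb /=.
  have hj' : (j.+1 <= n.+1)%N by [].
  by rewrite !take_takel // E.
- have [b Hb] := ext E Ha.
  by move: (N2 b); rewrite Hb eqxx.
- have [a Ha] := ext (esym E) Hb.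
  by move: (N1 a); rewrite Ha eqxx.
Qed.

Lemma Sk k (f : V R T k) : S k f.
Proof.
move=> w1 w2; rewrite !take_oversize ?size_tuple // => /ws_inj -> //.
Qed.

Lemma iterSk n (v : V R T n.+2) i : (i <= n.+1)%N -> S (n.+2 - i) (iter i (@Tk R A T n.+2) v).
Proof.
elim: i => [|i IH] hi; first by rewrite subn0; exact: Sk.
have hi' : (i <= n.+1)%N by apply: ltnW.
move: (IH hi').
have -> : (n.+2 - i = (n - i).+2)%N by lia.
have -> : (n.+2 - i.+1 = (n - i).+1)%N by lia.
move=> H /=; apply: step => //; lia.
Qed.

Lemma psiE k (u : V R T 1) (w : Word T k) :
  psi k u w = \sum_(u' | take 1 (ws w) == ws u') u u'.
Proof. by rewrite /psi coordE. Qed.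

Lemma toPsi k (f : V R T k) : (0 < k)%N -> S 1 f -> exists u, f = psi k u.
Proof.
move=> hk S1.
exists [ffun u' => oapp f 0 [pick w | take 1 (ws w) == ws u']].
apply/ffunP => w; rewrite psiE sum_atmost1; last first.
  by move=> x y /eqP Hx /eqP Hy; apply: ws_inj; rewrite -Hx -Hy.
case: pickP => [u0 /eqP H | N] /=.
  rewrite ffunE; case: pickP => [w0 /eqP H0 | N'] /=.
    by apply: S1; rewrite H H0.
  by move: (N' w); rewrite H eqxx.
have sz : size (take 1 (ws w)) == 1%N by rewrite size_takel // size_tuple.
have adm : admissible T (take 1 (ws w)).
  by rewrite /admissible; case: (ws w) => [|x s0] //=; rewrite take0.
by move: (N (exist _ (Tuple sz) adm)); rewrite eqxx.
Qed.
End S.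

Theorem lemma1p2 (R : rcfType) (A : finType) (T : A -> A -> bool) (k : nat) :
  (1 <= k)%N ->
  exists n : nat, forall v : V R T k,
    exists u : V R T 1, iter n (@Tk R A T k) v = psi k u.
Proof.
case: k => [//|[|n]] _.
  by exists 0%N => v; apply: toPsi => //; exact: Sk.
exists n.+1 => v; apply: toPsi => //.
have := iterSk v (leqnn n.+1).
by have -> : (n.+2 - n.+1 = 1)%N by lia.
Qed.
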